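(* Let $S$ be a scheme on $X$, $\mathbb F$ a field, $x\in X$, $E_a^*=E_a^*(x)$. Let $a\ge 0$ be an integer and $R_{i_b},R_{j_b},R_{\ell_b}\in S$ for $b=0,\dots,a$. Suppose $p_{i_bj_b}^{\ell_b}=1$ and $k_{i_b}=k_{\ell_b}=2$ for all $b\in\{0,\dots,a\}$, and $\ell_c=i_{c+1}$ for all $c\in\{0,\dots,a-1\}$. Write $xR_{i_0}=\{u_1,u_2\}$ and $xR_{\ell_a}=\{v_1,v_2\}$. Then the product $E_{i_0}^*A_{j_0}E_{\ell_0}^*E_{i_1}^*A_{j_1}E_{\ell_1}^*\cdots E_{i_a}^*A_{j_a}E_{\ell_a}^*$ equals either $E_{u_1v_1}+E_{u_2v_2}$ or $E_{u_1v_2}+E_{u_2v_1}$.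
   Context: Let $X$ be a nonempty finite set. A scheme of class $d$ on $X$ is a partition $S=\{R_0,\dots,R_d\}$ of $X\times X$ into nonempty sets such that $R_0=\{(b,b):b\in X\}$; for each $c$ there is $c'$ with $R_{c'}=\{(f,e):(e,f)\in R_c\}$; and for all $i,j,k$ the intersection number $p_{ij}^k=|\{\ell\in X:(m,\ell)\in R_i,(\ell,n)\in R_j\}|$ does not depend on $(m,n)\in R_k$. The valency is $k_a=p_{aa'}^0$. For $y\in X$, $yR_a=\{z:(y,z)\in R_a\}$. $A_a\in M_X(\mathbb F)$ is the $(0,1)$ adjacency matrix of $R_a$, $E_a^*(y)$ is the diagonal $(0,1)$-matrix with ones exactly at positions indexed by $yR_a$, and $E_{uv}$ is the matrix unit with a single $1$ at position $(u,v)$. *)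

(* Defs.v *)
From HB Require Import structures.
From mathcomp Require Import all_boot all_order all_algebra.
Set Implicit Arguments. Unset Strict Implicit. Unset Printing Implicit Defensive.
Import GRing.Theory.
Local Open Scope ring_scope.

(* A scheme of class d on a finite set X is encoded by the function
   r : X -> X -> 'I_d.+1 sending (m,n) to the index c with (m,n) \in R_c;
   R_c = [set (m,n) | r m n == c]. *)

Section Scheme.
Variables (X : finType) (d : nat) (r : X -> X -> 'I_d.+1).

Definition pnum (i j : 'I_d.+1) (m n : X) : nat :=
  #|[set l | (r m l == i) && (r l n == j)]|.

Definition is_scheme : Prop :=
  [/\ (forall c : 'I_d.+1, exists m n, r m n = c),
      (forall m n, (r m n == ord0) = (m == n)),
      (forall c : 'I_d.+1, exists c' : 'I_d.+1,
          forall e f, (r f e == c') = (r e f == c))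
    & (forall (i j k : 'I_d.+1) (m n m' n' : X),
          r m n = k -> r m' n' = k -> pnum i j m n = pnum i j m' n')].

(* intersection number p_{ij}^k, evaluated at some pair in R_k *)
Definition inum (i j k : 'I_d.+1) : nat :=
  match [pick mn : X * X | r mn.1 mn.2 == k] with
  | Some mn => pnum i j mn.1 mn.2
  | None => 0
  end.

Definition tr_idx (c : 'I_d.+1) : 'I_d.+1 :=
  odflt c [pick c' : 'I_d.+1 | [forall e, forall f, (r f e == c') == (r e f == c)]].

Definition valency (c : 'I_d.+1) : nat := inum c (tr_idx c) ord0.

Variable F : fieldType.

(* matrices indexed by X via enum_rank *)
Definition adjmx (c : 'I_d.+1) : 'M[F]_#|X| :=
  \matrix_(p, q) (r (enum_val p) (enum_val q) == c)%:R.

Definition dualidem (y : X) (c : 'I_d.+1) : 'M[F]_#|X| :=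
  \matrix_(p, q) ((p == q) && (r y (enum_val p) == c))%:R.


Definition chain (y : X) (a : nat) (i j l : nat -> 'I_d.+1) : 'M[F]_#|X| :=
  foldr (fun b M => dualidem y (i b) *m adjmx (j b) *m dualidem y (l b) *m M)
        1%:M (iota 0 a.+1).
End Scheme.

Definition Emx (F : fieldType) (X : finType) (u v : X) : 'M[F]_#|X| :=
  delta_mx (enum_rank u) (enum_rank v).

(* Main.v *)
Require Import Defs.
From mathcomp Require Import all_boot all_order all_algebra.
From mathcomp Require Import zify.
Set Implicit Arguments. Unset Strict Implicit. Unset Printing Implicit Defensive.
Import GRing.Theory.
Local Open Scope ring_scope.

Section Aux.
Variables (X : finType) (d : nat) (r : X -> X -> 'I_d.+1) (Hs : is_scheme r).

Lemma Hs1 : forall c : 'I_d.+1, exists m n, r m n = c.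
Proof. by move: Hs; rewrite /is_scheme => -[]. Qed.
Lemma Hs2 : forall m n, (r m n == ord0) = (m == n).
Proof. by move: Hs; rewrite /is_scheme => -[]. Qed.
Lemma Hs3 : forall c : 'I_d.+1, exists c' : 'I_d.+1,
          forall e f, (r f e == c') = (r e f == c).
Proof. by move: Hs; rewrite /is_scheme => -[]. Qed.
Lemma Hs4 : forall (i j k : 'I_d.+1) (m n m' n' : X),
          r m n = k -> r m' n' = k -> pnum r i j m n = pnum r i j m' n'.
Proof. by move: Hs; rewrite /is_scheme => -[]. Qed.

Lemma inum_eq (i j k : 'I_d.+1) m n : r m n = k -> inum r i j k = pnum r i j m n.
Proof.
move=> Hmn; rewrite /inum; case: pickP => [mn /eqP Hk|H].
  exact: (Hs4 _ _ Hk Hmn).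
by move: (H (m, n)); rewrite /= Hmn eqxx.
Qed.

Lemma rxx y : r y y = ord0.
Proof. by apply/eqP; rewrite Hs2. Qed.

Lemma valencyE (c : 'I_d.+1) y : valency r c = #|[set z | r y z == c]|.
Proof.
rewrite /valency (inum_eq _ _ (rxx y)) /pnum /tr_idx.
case: pickP => [c' /forallP Hc'|H]; last first.
  case: (Hs3 c) => c' Hc'.
  move: (H c') => /negbT/negP; case; apply/forallP => e; apply/forallP => f.
  by rewrite Hc'.
apply: eq_card => z; rewrite !inE /=.
move: (Hc' y) => /forallP /(_ z) /eqP ->.
by rewrite andbb.
Qed.


Definition Bij (P Q : pred X) (R : X -> X -> bool) :=
 [/\ forall p q, R p q -> P p && Q q,
     forall p q q', R p q -> R p q' -> q = q',
     forall p p' q, R p q -> R p' q -> p = p',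
     forall p, P p -> exists q, R p q
   & forall q, Q q -> exists p, R p q].

Lemma card1_eq (A : {set X}) a b : #|A| = 1%N -> a \in A -> b \in A -> a = b.
Proof. by move/eqP/cards1P => [z ->]; rewrite !inE => /eqP-> /eqP->. Qed.

Lemma card1_ex (A : {set X}) : #|A| = 1%N -> exists a, a \in A.
Proof. by move/eqP/cards1P => [z ->]; exists z; rewrite inE. Qed.

Lemma block_bij x (i j l : 'I_d.+1) : inum r i j l = 1%N -> valency r i = 2%N ->
  valency r l = 2%N ->
  Bij (fun p => r x p == i) (fun q => r x q == l)
      (fun p q => [&& r x p == i, r p q == j & r x q == l]).
Proof.
move=> Hp Hvi Hvl.
have pnum1 q : r x q == l -> #|[set w | (r x w == i) && (r w q == j)]| = 1%N.
  by move=> /eqP Hq; rewrite -Hp (inum_eq _ _ Hq).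
have [j' Hj'] := Hs3 j.
pose A u := [set v | (r x v == l) && (r u v == j)].
have cA u : #|A u| = pnum r l j' x u.
  by apply: eq_card => v; rewrite !inE Hj'.
have cAeq u u' : r x u = i -> r x u' = i -> #|A u| = #|A u'|.
  by move=> H1 H2; rewrite !cA (Hs4 _ _ H1 H2).
have /cards2P [u0 [u1 [Hne Hi]]] : #|[set z | r x z == i]| == 2.
  by rewrite -(valencyE _ x) Hvi.
have Hu0 : r x u0 = i.
  by apply/eqP; move: (in_set2 u0 u0 u1); rewrite -Hi inE eqxx.
have Hu1 : r x u1 = i.
  by apply/eqP; move: (in_set2 u1 u0 u1); rewrite -Hi inE eqxx orbT.
have HU : [set z | r x z == l] = A u0 :|: A u1.
  apply/setP => v; rewrite !inE.
  case Hv: (r x v == l) => //=.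
  have [w Hw] := card1_ex (pnum1 _ Hv).
  move: Hw; rewrite inE => /andP [Hw1 Hw2].
  have : w \in [set z | r x z == i] by rewrite inE.
  by rewrite Hi !inE => /orP [] /eqP <-; rewrite Hw2 ?orbT.
have HI : A u0 :&: A u1 = set0.
  apply/setP => v; rewrite !inE.
  apply/negP => /andP [/andP [Hv H0] /andP [_ H1]].
  move/negP: Hne; apply; apply/eqP.
  by apply: (card1_eq (pnum1 _ Hv)); rewrite inE ?H0 ?H1 ?Hu0 ?Hu1 eqxx.
have cA1 p : r x p = i -> #|A p| = 1%N.
  move=> Hpi; rewrite (cAeq p u0) //.
  have := cardsU (A u0) (A u1); rewrite -HU HI cards0 subn0 -(valencyE _ x) Hvl.
  by rewrite (cAeq u1 u0) //; move: #|A u0| => n; lia.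
split.
- by move=> p q /and3P [-> _ ->].
- move=> p q q' /and3P [/eqP Hpi H1 H2] /and3P [_ H1' H2'].
  by apply: (card1_eq (cA1 _ Hpi)); rewrite inE ?H1 ?H2 ?H1' ?H2'.
- move=> p p' q /and3P [H1 H2 H3] /and3P [H1' H2' _].
  by apply: (card1_eq (pnum1 _ H3)); rewrite inE ?H1 ?H2 ?H1' ?H2'.
- move=> p Hpi; have [q] := card1_ex (cA1 _ (eqP Hpi)).
  by rewrite inE => /andP [H1 H2]; exists q; rewrite Hpi H1 H2.
- move=> q Hq; have [p] := card1_ex (pnum1 _ Hq).
  by rewrite inE => /andP [H1 H2]; exists p; rewrite Hq H1 H2.
Qed.

Lemma bij_comp P Q T R1 R2 : Bij P Q R1 -> Bij Q T R2 ->
  Bij P T (fun p q => [exists k, R1 p k && R2 k q]).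
Proof.
move=> [a1 b1 c1 d1 e1] [a2 b2 c2 d2 e2]; split.
- move=> p q /existsP [k /andP [H1 H2]].
  by move: (a1 _ _ H1) (a2 _ _ H2) => /andP [-> _] /andP [_ ->].
- move=> p q q' /existsP [k /andP [H1 H2]] /existsP [k' /andP [H1' H2']].
  by rewrite (b1 _ _ _ H1 H1') in H2; apply: b2 H2 H2'.
- move=> p p' q /existsP [k /andP [H1 H2]] /existsP [k' /andP [H1' H2']].
  by rewrite (c2 _ _ _ H2 H2') in H1; apply: c1 H1 H1'.
- move=> p Hp; have [k Hk] := d1 _ Hp.
  have /andP [_ Hk2] := a1 _ _ Hk; have [q Hq] := d2 _ Hk2.
  by exists q; apply/existsP; exists k; rewrite Hk Hq.
- move=> q Hq; have [k Hk] := e2 _ Hq.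
  have /andP [Hk2 _] := a2 _ _ Hk; have [p Hp] := e1 _ Hk2.
  by exists p; apply/existsP; exists k; rewrite Hk Hp.
Qed.

End Aux.
Section Mx.
Variables (X : finType) (d : nat) (r : X -> X -> 'I_d.+1) (F : fieldType).

Definition relmx (R : X -> X -> bool) : 'M[F]_#|X| :=
  \matrix_(p, q) (R (enum_val p) (enum_val q))%:R.

Lemma relmx_ext R R' : (forall p q, R p q = R' p q) -> relmx R = relmx R'.
Proof. by move=> H; apply/matrixP => p q; rewrite !mxE H. Qed.

Lemma relmx_mul R1 R2 :
  (forall p q k k', R1 p k && R2 k q -> R1 p k' && R2 k' q -> k = k') ->
  relmx R1 *m relmx R2 = relmx (fun p q => [exists k, R1 p k && R2 k q]).
Proof.
move=> Hu; apply/matrixP => p q; rewrite !mxE.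
case: (boolP [exists k, _]) => [/existsP [k0 Hk0]|Hn].
  rewrite (bigD1 (enum_rank k0)) //= !mxE enum_rankK.
  move: (Hk0) => /andP [-> ->]; rewrite mulr1 big1 ?addr0 // => k Hk.
  rewrite !mxE; case H1: (R1 _ _); case H2: (R2 _ _); rewrite ?mulr0 ?mul0r //.
  move: (Hu _ _ _ _ Hk0 (introT andP (conj H1 H2))) => Heq.
  by move: Hk; rewrite Heq enum_valK eqxx.
rewrite big1 // => k _; rewrite !mxE.
case H1: (R1 _ _); case H2: (R2 _ _); rewrite ?mulr0 ?mul0r ?mulr1 //.
by move/existsP: Hn; case; exists (enum_val k); rewrite H1 H2.
Qed.

Lemma dualidemE y c :
  dualidem r F y c = relmx (fun p q => (p == q) && (r y p == c)).
Proof.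
by apply/matrixP => p q; rewrite !mxE (inj_eq enum_val_inj).
Qed.

Lemma adjmxE c : adjmx r F c = relmx (fun p q => r p q == c).
Proof. by apply/matrixP => p q; rewrite !mxE. Qed.

Lemma EmxE u v : Emx F u v = relmx (fun p q => (p == u) && (q == v)).
Proof.
have E (p : 'I_#|X|) w : (p == enum_rank w) = (enum_val p == w).
  by apply/eqP/eqP => [->|<-]; rewrite ?enum_rankK ?enum_valK.
by apply/matrixP => p q; rewrite !mxE !E.
Qed.

Lemma block_eq x i j l :
  dualidem r F x i *m adjmx r F j *m dualidem r F x l =
  relmx (fun p q => [&& r x p == i, r p q == j & r x q == l]).
Proof.
rewrite !dualidemE adjmxE relmx_mul; last first.
  by move=> p q k k' /andP [/andP [/eqP <- _] _] /andP [/andP [/eqP <- _] _].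
rewrite relmx_mul; last first.
  by move=> p q k k' /andP [_ /andP [/eqP -> _]] /andP [_ /andP [/eqP -> _]].
apply: relmx_ext => p q.
simpl; apply/idP/idP.
  move=> /existsP [k /and3P [/existsP [k' /andP [/andP [/eqP Hk' H1] H2]] /eqP Hk H3]].
  by subst; rewrite H1 H2 H3.
move=> /and3P [H1 H2 H3]; apply/existsP; exists q; rewrite eqxx H3 andbT.
rewrite andbT; apply/existsP; exists p; by rewrite eqxx H1 H2.
Qed.

End Mx.

Unset Implicit Arguments.
Lemma final_form (X : finType) (F : fieldType) (R : X -> X -> bool) u1 u2 w1 w2 :
  u1 != u2 -> R u1 w1 -> R u2 w2 ->
  (forall p q, R p q -> (p == u1) || (p == u2)) ->
  (forall p q q', R p q -> R p q' -> q = q') ->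
  relmx F R = Emx F u1 w1 + Emx F u2 w2.
Proof.
move=> Hne Hw1 Hw2 Hmem Hfun.
have Hne' : u2 != u1 by rewrite eq_sym.
rewrite !EmxE; apply/matrixP => p q; rewrite !mxE.
move: (enum_val p) (enum_val q) => p' q'.
case: (boolP (R p' q')) => H.
  move: (Hmem _ _ H) => /orP [] /eqP ?; subst p'.
    by rewrite -(Hfun _ _ _ Hw1 H) !eqxx (negbTE Hne) /= addr0.
  by rewrite -(Hfun _ _ _ Hw2 H) !eqxx (negbTE Hne') /= add0r.
case: (boolP ((p' == u1) && (q' == w1))) => [/andP [/eqP ? /eqP ?]|E1].
  by subst; rewrite Hw1 in H.
case: (boolP ((p' == u2) && (q' == w2))) => [/andP [/eqP ? /eqP ?]|E2].
  by subst; rewrite Hw2 in H.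
by rewrite /= addr0.
Qed.

Theorem corollary3p9 (F : fieldType) (X : finType) (d : nat)
  (r : X -> X -> 'I_d.+1) (Hs : is_scheme r) (x : X) (a : nat)
  (i j l : nat -> 'I_d.+1)
  (Hp : forall b, (b <= a)%N -> inum r (i b) (j b) (l b) = 1%N)
  (Hk : forall b, (b <= a)%N -> valency r (i b) = 2%N /\ valency r (l b) = 2%N)
  (Hc : forall c, (c < a)%N -> l c = i c.+1)
  (u1 u2 v1 v2 : X)
  (Hu : [set y | r x y == i 0%N] = [set u1; u2]) (Hu12 : u1 != u2)
  (Hv : [set y | r x y == l a] = [set v1; v2]) (Hv12 : v1 != v2) :
  chain r F x a i j l = Emx F u1 v1 + Emx F u2 v2 \/
  chain r F x a i j l = Emx F u1 v2 + Emx F u2 v1.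
Proof.
have blk b : (b <= a)%N -> Bij (fun p => r x p == i b) (fun q => r x q == l b)
      (fun p q => [&& r x p == i b, r p q == j b & r x q == l b]).
  by move=> Hb; have [H1 H2] := Hk b Hb; exact: (block_bij Hs x (Hp b Hb) H1 H2).
have key : forall n b, (b + n = a)%N -> exists R,
    foldr (fun b M => dualidem r F x (i b) *m adjmx r F (j b) *m dualidem r F x (l b) *m M)
      1%:M (iota b n.+1) = relmx F R /\
    Bij (fun p => r x p == i b) (fun q => r x q == l a) R.
  elim=> [|n IH] b Hb.
    rewrite addn0 in Hb; subst b.
    eexists; split; first by rewrite /= mulmx1 block_eq.
    exact: blk.
  have Hb' : (b.+1 + n = a)%N by rewrite addSnnS.
  have [R [HR HB]] := IH b.+1 Hb'.
  have Hba : (b < a)%N by rewrite -Hb; lia.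
  have [_ f1 _ _ _] := blk b (ltnW Hba).
  have -> : foldr (fun b M => dualidem r F x (i b) *m adjmx r F (j b) *m dualidem r F x (l b) *m M)
      1%:M (iota b n.+2) = dualidem r F x (i b) *m adjmx r F (j b) *m dualidem r F x (l b) *m relmx F R.
    by rewrite -HR.
  rewrite block_eq relmx_mul; last first.
    by move=> p q k k' /andP [H1 _] /andP [H2 _]; apply: f1 H1 H2.
  eexists; split; first by [].
  apply: bij_comp; first exact: blk (ltnW Hba).
  by rewrite Hc.
have [R [HR [a1 b1 c1 d1 e1]]] := key a 0%N (add0n a).
rewrite /chain HR.
have Su p : (r x p == i 0%N) = (p == u1) || (p == u2).
  by move/setP: Hu => /(_ p); rewrite !inE.
have Sv p : (r x p == l a) = (p == v1) || (p == v2).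
  by move/setP: Hv => /(_ p); rewrite !inE.
have Hmem p q : R p q -> (p == u1) || (p == u2).
  by move=> /a1 /andP [H _]; rewrite -Su.
have Iu1 : r x u1 == i 0%N by rewrite Su eqxx.
have Iu2 : r x u2 == i 0%N by rewrite Su eqxx orbT.
have [w1 Hw1] := d1 u1 Iu1.
have [w2 Hw2] := d1 u2 Iu2.
have Hw1v : (w1 == v1) || (w1 == v2) by move: (a1 _ _ Hw1) => /andP [_]; rewrite Sv.
have Hw2v : (w2 == v1) || (w2 == v2) by move: (a1 _ _ Hw2) => /andP [_]; rewrite Sv.
have Hw12 : w1 != w2.
  apply/eqP => E; subst w2; move/negP: Hu12; apply; apply/eqP.
  exact: c1 Hw1 Hw2.
case/orP: Hw1v => /eqP E1; subst w1.
  case/orP: Hw2v => /eqP E2; subst w2; first by rewrite eqxx in Hw12.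
  by left; apply: final_form.
case/orP: Hw2v => /eqP E2; subst w2; last by rewrite eqxx in Hw12.
by right; apply: final_form.
Qed.
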